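(* Let $B_1$ and $B_2$ be $m$-level rook equivalent singleton boards, both written with $n$ columns, such that $\{B_1,B_2\}$ is an edge of the $m$-level rook equivalence graph. Then the $m$-level root vectors $\xi_m(B_1)$ and $\xi_m(B_2)$ differ only in two positions, whose entries are swapped. That is, if $\xi_m(B_1)=\langle z_1,\ldots,z_{i_1},\ldots,z_{i_2},\ldots,z_n\rangle$ then $\xi_m(B_2)=\langle z_1,\ldots,z_{i_2},\ldots,z_{i_1},\ldots,z_n\rangle$ for some $1\le i_1<i_2\le n$ with $z_{i_1}\ne z_{i_2}$.
   Context: Fix an integer $m>0$. A Ferrers board is given by a weakly increasing sequence of non-negative integers $B=(b_1,\ldots,b_n)$ of column heights (cells in column $i$, rows $1,\ldots,b_i$, of the first quadrant); prepending height-$0$ columns on the left does not change the board, and boards are compared with the same number of columns by such padding. The rows are partitioned into levels: level $t$ consists of rows $(t-1)m+1,\ldots,tm$. An $m$-level rook placement of $k$ rooks is a set of $k$ cells of $B$, no two in the same level or the same column; $r_{k,m}(B)$ is their number, and two boards are $m$-level rook equivalent if they have equal $r_{k,m}$ for all $k\ge0$. For an integer $o$, $\lfloor o\rfloor_m$ is the largest multiple of $m$ that is $\le o$. $B$ is singleton if for each $i<n$, $b_i-\lfloor b_i\rfloor_m\ne0$ implies $\lfloor b_i\rfloor_m<\lfloor b_{i+1}\rfloor_m$. The $m$-level root vector of $B$ is $\xi_m(B)=\langle 0-b_1,m-b_2,\ldots,m(n-1)-b_n\rangle$. The $m$-level rook equivalence graph of the class of a singleton board $B$ has as vertices all singleton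 boards $m$-level rook equivalent to $B$, and $\{B_1,B_2\}$ is an edge iff, written with the same number of columns, $B_1$ and $B_2$ differ in exactly two columns $i,j$, where $B_1$ has $k$ more cells than $B_2$ in column $i$ and $k$ fewer in column $j$, for some $k>0$. *)

(* Defs.v *)
From mathcomp Require Import all_boot all_order all_algebra.
Unset Printing Implicit Defensive.

(* A Ferrers board: the sequence of column heights b_1..b_n (0-based in Rocq),
   weakly increasing. *)
Definition ferrers (B : seq nat) : bool := sorted leq B.

(* maximal column height: rows are indexed 0..maxh B - 1 (row r = paper row r+1) *)
Definition maxh (B : seq nat) : nat := foldr maxn 0 B.

(* cells (i, r) with column i (0-based) and row r (0-based, paper row r+1) *)
Definition cell_in (B : seq nat) (c : 'I_(size B) * 'I_(maxh B)) : bool :=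
  (c.2 < nth 0 B c.1)%N.

(* level of a 0-based row r : paper level t contains rows (t-1)m+1..tm,
   i.e. 0-based rows (t-1)m..tm-1, so level index (0-based) = r %/ m *)
Definition level (m r : nat) : nat := r %/ m.

Definition m_level_placement (m : nat) (B : seq nat)
    (P : {set 'I_(size B) * 'I_(maxh B)}) : bool :=
  [forall c in P, cell_in B c] &&
  [forall c in P, forall d in P,
     (c != d) ==> ((c.1 != d.1) && (level m c.2 != level m d.2))].

Definition rook_num (m k : nat) (B : seq nat) : nat :=
  #|[set P : {set 'I_(size B) * 'I_(maxh B)} |
      m_level_placement m B P && (#|P| == k)]|.

Definition rook_equiv (m : nat) (B1 B2 : seq nat) : Prop :=
  forall k, rook_num m k B1 = rook_num m k B2.

Definition floorm (m o : nat) : nat := (o %/ m) * m.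

Definition singleton (m : nat) (B : seq nat) : bool :=
  [forall i : 'I_(size B),
     ((i.+1 < size B) && (nth 0 B i - floorm m (nth 0 B i) != 0))
       ==> (floorm m (nth 0 B i) < floorm m (nth 0 B i.+1))].

Definition root_vector (m : nat) (B : seq nat) : seq int :=
  [seq ((m * i)%:Z - (nth 0 B i)%:Z)%R | i <- iota 0 (size B)].

Definition edge_move (B1 B2 : seq nat) : Prop :=
  size B1 = size B2 /\
  exists i j k, [/\ (i < size B1)%N, (j < size B1)%N, i <> j & (0 < k)%N] /\
    [/\ nth 0 B1 i = nth 0 B2 i + k, nth 0 B1 j + k = nth 0 B2 j &
    forall l, l <> i -> l <> j -> nth 0 B1 l = nth 0 B2 l].

Definition rook_graph_edge (m : nat) (B1 B2 : seq nat) : Prop :=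
  [/\ ferrers B1, ferrers B2, singleton m B1 & singleton m B2] /\
  rook_equiv m B1 B2 /\ edge_move B1 B2.

(* Main.v *)
Require Import Defs.
From mathcomp Require Import all_boot all_order all_algebra.
From mathcomp Require Import zify ring.
Set Implicit Arguments. Unset Strict Implicit.

Definition lev (m : nat) (s : seq (option nat)) : seq nat := [seq r %/ m | r <- pmap id s].
Definition rooks (s : seq (option nat)) : nat := count (fun o : option nat => o : bool) s.
Definition choices (m b : nat) (s : seq (option nat)) : seq (option nat) :=
  None :: [seq Some r | r <- iota 0 b & r %/ m \notin lev m s].
Fixpoint plcr (m : nat) (cs : seq nat) : seq (seq (option nat)) :=
  match cs with
  | [::] => [:: [::]]
  | b :: cs' => [seq rcons s o | s <- plcr m cs', o <- choices m b s]
  end.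
Definition plc m B := plcr m (rev B).
Definition valid (m : nat) (B : seq nat) (s : seq (option nat)) : Prop :=
  [/\ size s = size B, (forall i r, nth None s i = Some r -> r < nth 0 B i) & uniq (lev m s)].

Lemma lev_rcons m s o : lev m (rcons s o) = lev m s ++ lev m [:: o].
Proof. by rewrite /lev -cats1 pmap_cat map_cat. Qed.

Lemma mem_plcr m cs s : s \in plcr m cs <-> valid m (rev cs) s.
Proof.
elim: cs s => [|b cs IH] s.
  rewrite /= inE; split; first by move/eqP->; split => // i r; rewrite nth_nil.
  by case=> /= /size0nil ->.
rewrite rev_cons; change (plcr m (b :: cs)) with [seq rcons s o | s <- plcr m cs, o <- choices m b s]; split.
  move/(@allpairsPdep _ (fun _ => option nat : eqType)) => [s' [o [Hs' Ho ->]]].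
  have [Hsz Hfit Hu] := (IH s').1 Hs'.
  split.
  - by rewrite !size_rcons Hsz.
  - move=> i r; rewrite !nth_rcons Hsz; case: ifP => _; first exact: Hfit.
    case: ifP => // _ Eo; move: Ho; rewrite Eo /choices inE /= => /mapP [r' ].
    by rewrite mem_filter mem_iota => /andP [_ /andP [_]] /= ? [->].
  - rewrite lev_rcons cat_uniq Hu /=; move: Ho; rewrite /choices inE => /orP [/eqP -> //|].
    move/mapP => [r]; rewrite mem_filter => /andP [Hr _] ->.
    by rewrite /lev /= orbF andbT.
case=> Hsz Hfit Hu.
case/lastP: s Hsz Hfit Hu => [|s' o]; first by rewrite size_rcons.
rewrite !size_rcons => /eqP; rewrite eqSS => /eqP Hsz Hfit Hu.
apply/(@allpairsPdep _ (fun _ => option nat : eqType)); exists s', o; split => //.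
  apply/IH; split => //.
    move=> i r E; have Hi : i < size s'.
      by rewrite ltnNge; apply/negP => H; rewrite nth_default in E.
    by have := Hfit i r; rewrite !nth_rcons -Hsz Hi => /(_ E).
  by move: Hu; rewrite lev_rcons cat_uniq => /andP [].
case: o Hfit Hu => [r|] Hfit Hu; last by rewrite /choices inE.
have := Hfit (size s') r; rewrite !nth_rcons ltnn eqxx Hsz ltnn eqxx => /(_ erefl) Hr.
rewrite /choices inE /=; apply/mapP; exists r => //; rewrite mem_filter mem_iota /= Hr andbT.
by move: Hu; rewrite lev_rcons cat_uniq /lev /= orbF => /and3P [_ ].
Qed.

Lemma uniq_rcons_pairs (T : eqType) (L : seq (seq T)) (t : seq T -> seq T) :
  uniq L -> (forall s, uniq (t s)) -> uniq [seq rcons s o | s <- L, o <- t s].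
Proof.
move=> + Ht; elim: L => [|a L IH] //; rewrite cons_uniq => /andP [HaL HL].

rewrite allpairs_cons cat_uniq (map_inj_uniq (@rcons_injr _ a)) Ht IH //= andbT.
apply/hasPn => z /(@allpairsPdep _ (fun _ => T)) [s [o [Hs _ ->]]].
apply/negP => /mapP [o' _ /rcons_inj [E _]].
by move: HaL; rewrite -E Hs.
Qed.

Lemma uniq_plcr m cs : uniq (plcr m cs).
Proof.
elim: cs => [|b cs IH] //.
apply: uniq_rcons_pairs => // s.
rewrite /choices /= map_inj_uniq ?filter_uniq ?iota_uniq //; last by move=> ? ? [].
by rewrite andbT; apply/mapP => [[]].
Qed.

Lemma count_div_eq m a b : 0 < m ->
  count (fun r => r %/ m == a) (iota 0 b) = minn m (b - a * m).
Proof.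
move=> m0; elim: b => [|b IH]; first by rewrite /= minn0.
rewrite -addn1 iotaD count_cat IH /= addn0 add0n.
have E : (b %/ m == a) = (a * m <= b < a * m + m).
  by rewrite eqn_leq -ltnS ltn_divLR // leq_divRL // mulSn andbC addnC.



rewrite E; case: (leqP (a * m) b) => H1 /=; case: (ltnP b (a * m + m)) => H2 /=; lia.
Qed.

Lemma count_div_in m L b : 0 < m -> uniq L -> all (fun a => a < b %/ m) L ->
  count (fun r => r %/ m \in L) (iota 0 b) = m * size L.
Proof.
move=> m0; elim: L => [|a L IH] /=; first by rewrite muln0 count_pred0.
move=> /andP [HaL HL] /andP [Ha HA].
have -> : count (fun r => r %/ m \in a :: L) (iota 0 b) =
   count (predU (fun r => r %/ m == a) (fun r => r %/ m \in L)) (iota 0 b).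
  by apply: eq_count => r; rewrite inE.
have H0 : count (predI (fun r => r %/ m == a) (fun r => r %/ m \in L)) (iota 0 b) = 0.
  apply/eqP; rewrite eqn0Ngt -has_count; apply/hasPn => r _ /=.
  by apply/negP => /andP [/eqP -> ]; apply/negP.

have := count_predUI (fun r => r %/ m == a) (fun r => r %/ m \in L) (iota 0 b).
rewrite H0 addn0 => ->; rewrite count_div_eq
 // IH // mulnS.
have : (a + 1) * m <= b by rewrite -leq_divRL // addn1.
rewrite mulnDl mul1n => H; congr (_ + _); lia.
Qed.

Lemma count_avail m L b : 0 < m -> uniq L -> all (fun a => a < b %/ m) L ->
  count (fun r => r %/ m \notin L) (iota 0 b) = b - m * size L.
Proof.
move=> m0 HU HA.
rewrite -[b in RHS](size_iota 0 b) -(count_predC (fun r => r %/ m \in L)) count_div_in //.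
by rewrite addKn.

Qed.

Definition Pdist (m : nat) (s : seq (option nat)) : Prop :=
  forall i j a b, i != j -> nth None s i = Some a -> nth None s j = Some b -> a %/ m != b %/ m.

Lemma in_lev m s a : (a \in lev m s) <-> exists j r, nth None s j = Some r /\ a = r %/ m.
Proof.
split.
  case/mapP => r; rewrite mem_pmap map_id => /(nthP None) [j _ Ej] ->.
  by exists j, r.
case=> j [r [Ej ->]]; apply/mapP; exists r => //; rewrite mem_pmap map_id -Ej mem_nth //.
by rewrite ltnNge; apply/negP => H; rewrite nth_default in Ej.
Qed.

Lemma uniq_levP m s : uniq (lev m s) <-> Pdist m s.
Proof.
elim: s => [|o s IH].
  by split => // _ i j a b _; rewrite nth_nil.
case: o => [a0|].
  have -> : lev m (Some a0 :: s) = a0 %/ m :: lev m s by [].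
  rewrite cons_uniq; split.
    case/andP => Hn /IH Hs [|i] [|j] a b //= Hij.
    - move=> [<-] Ej; apply/negP => /eqP E; move/negP: Hn; apply.
      by apply/in_lev; exists j, b.
    - move=> Ei [<-]; apply/negP => /eqP E; move/negP: Hn; apply.
      by apply/in_lev; exists i, a.
    - exact: Hs.
  move=> H; apply/andP; split.
    apply/negP => /in_lev [j [r [Ej E]]].
    by move: (H 0 j.+1 a0 r erefl erefl Ej); rewrite E eqxx.
  by apply/IH => i j a b Hij; apply: (H i.+1 j.+1).
have -> : lev m (None :: s) = lev m s by [].
split.
  move/IH => Hs [|i] [|j] a b //= Hij; exact: Hs.
by move=> H; apply/IH => i j a b Hij; apply: (H i.+1 j.+1).
Qed.

Lemma nth_le_maxh B i : i < size B -> nth 0 B i <= maxh B.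
Proof.
elim: B i => [|a B IH] [|i] //= H; first exact: leq_maxl.
by apply: leq_trans (IH i H) (leq_maxr _ _).
Qed.

Definition dec (m : nat) (B : seq nat) (s : seq (option nat)) :
  {set 'I_(size B) * 'I_(maxh B)} :=
  [set c : 'I_(size B) * 'I_(maxh B) | nth None s (val c.1) == Some (val c.2)].


Lemma valid_nth m B s i r : valid m B s -> nth None s i = Some r ->
  i < size B /\ r < maxh B.
Proof.
case=> Hsz Hfit _ E.
have Hi : i < size B by rewrite -Hsz ltnNge; apply/negP => H; rewrite nth_default in E.
by split => //; apply: leq_trans (Hfit _ _ E) (nth_le_maxh Hi).
Qed.

Lemma dec_placement m B s : valid m B s -> m_level_placement m B (dec m B s).
Proof.
move=> Hv; have [Hsz Hfit Hu] := Hv; have Hd := (uniq_levP m s).1 Hu.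
apply/andP; split.
  apply/forallP => c; apply/implyP; rewrite inE => /eqP E.
  exact: Hfit E.
apply/forallP => c; apply/implyP; rewrite inE => /eqP Ec.
apply/forallP => d; apply/implyP; rewrite inE => /eqP Ed.
apply/implyP => Hcd.
have H1 : c.1 != d.1.
  apply/negP => /eqP E; move/negP: Hcd; apply; apply/eqP.
  move: Ed; rewrite -E Ec => -[/val_inj E2].
  by case: c d E E2 {Ec} => c1 c2 [d1 d2] /= -> ->.
rewrite H1 /=; apply: (Hd c.1 d.1) => //.
Qed.

Lemma dec_card m B s : valid m B s -> #|dec m B s| = rooks s.
Proof.
move=> Hv; have [Hsz _ _] := Hv.
rewrite -sum1_card.
have -> : \sum_(c in dec m B s) 1 =
   \sum_(i : 'I_(size B)) \sum_(j : 'I_(maxh B) | nth None s i == Some (val j)) 1.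
  by rewrite pair_big_dep; apply: eq_bigl => c; rewrite inE.
have -> : \sum_(i : 'I_(size B)) \sum_(j : 'I_(maxh B) | nth None s i == Some (val j)) 1
    = \sum_(i : 'I_(size B)) ((nth None s i : bool) : nat).
  apply: eq_bigr => i _; case E: (nth None s i) => [r|].
    have [_ Hr] := valid_nth Hv E.
    by rewrite (big_pred1 (Ordinal Hr)) // => j; rewrite /= inE -val_eqE.
  by rewrite big_pred0.
rewrite /rooks -sum1_count big_mkcond /= (big_nth None) -Hsz big_mkord.
by rewrite [RHS]big_mkcond; apply: eq_bigr => i _; case: (nth None s i).


Qed.

Lemma dec_inj m B s1 s2 : valid m B s1 -> valid m B s2 -> dec m B s1 = dec m B s2 -> s1 = s2.
Proof.
move=> H1 H2 E.
have K : forall t1 t2, valid m B t1 -> valid m B t2 -> dec m B t1 = dec m B t2 ->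
    forall i r, nth None t1 i = Some r -> nth None t2 i = Some r.
  move=> t1 t2 V1 V2 Et i r Er; have [Hi Hr] := valid_nth V1 Er.
  have : (Ordinal Hi, Ordinal Hr) \in dec m B t1 by rewrite inE /= Er.
  by rewrite Et inE /= => /eqP.
have [Hs1 _ _] := H1; have [Hs2 _ _] := H2.
apply: (@eq_from_nth _ None); first by rewrite Hs1 Hs2.
move=> i _; case E1: (nth None s1 i) => [r|]; first by rewrite (K _ _ H1 H2 E i r E1).
case E2: (nth None s2 i) => [r|] //.
by rewrite (K _ _ H2 H1 (esym E) i r E2) in E1.
Qed.

Definition enc (m : nat) (B : seq nat) (P : {set 'I_(size B) * 'I_(maxh B)}) : seq (option nat) :=
  [seq omap (fun c : 'I_(size B) * 'I_(maxh B) => val c.2)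
       [pick c in P | val c.1 == i] | i <- iota 0 (size B)].
Arguments enc : clear implicits.


Lemma nth_enc m B P i : i < size B ->
  nth None (enc m B P) i = omap (fun c : 'I_(size B) * 'I_(maxh B) => val c.2)
       [pick c in P | val c.1 == i].
Proof. by move=> Hi; rewrite /enc (nth_map 0) ?size_iota // nth_iota. Qed.

Lemma enc_valid m B P : m_level_placement m B P -> valid m B (enc m B P) /\ dec m B (enc m B P) = P.
Proof.
case/andP => /forallP Hcell /forallP Hdist.
have Hd : forall c d, c \in P -> d \in P -> c != d -> (c.1 != d.1) && (level m c.2 != level m d.2).
  move=> c d Hc Hd'; have := Hdist c; rewrite Hc /= => /forallP /(_ d).
  by rewrite Hd' /= => /implyP.
have Nth : forall i r, nth None (enc m B P) i = Some r ->
    exists c, [/\ c \in P, val c.1 = i & val c.2 = r].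
  move=> i r; case: (ltnP i (size B)) => Hi; last first.
    by rewrite nth_default // size_map size_iota.
  rewrite nth_enc //; case: pickP => [c /andP [Hc /eqP Ec] [Er]|//].
  by exists c.
split; first split.
- by rewrite size_map size_iota.
- move=> i r /Nth [c [Hc <- <-]].
  by have := Hcell c; rewrite Hc.
- apply/uniq_levP => i j a b Hij /Nth [c [Hc Ec Ea]] /Nth [d [Hd' Ed Eb]].
  have Hcd : c != d by apply/negP => /eqP E; move/negP: Hij; apply; rewrite -Ec -Ed E.
  by have := Hd c d Hc Hd' Hcd; rewrite /level Ea Eb => /andP [].
apply/setP => c; rewrite inE nth_enc //.
case: pickP => [d /andP [Hd' /eqP Edc] | Hn] /=.
  case: (boolP (c \in P)) => Hc.
    case: (eqVneq c d) => [-> | Hcd]; first by rewrite eqxx.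


    by have := Hd c d Hc Hd' Hcd; rewrite -(inj_eq val_inj) Edc eqxx.
  apply/negP => /eqP [E2]; move/negP: Hc; apply.
  have -> : c = d by case: c d Edc E2 {Hd'} => c1 c2 [d1 d2] /= /val_inj -> /val_inj ->.
  by [].
case: (boolP (c \in P)) => Hc //.
by have := Hn c; rewrite Hc eqxx.
exact: ltn_ord.

Qed.



Lemma rook_num_count m k B :
  rook_num m k B = count (fun s => rooks s == k) (plc m B).
Proof.
rewrite /rook_num; set L := filter
 (fun s => rooks s == k) (plc m B).
have HL : forall s, s \in L -> valid m B s.
  move=> s; rewrite mem_filter => /andP [_ /mem_plcr]; by rewrite revK.
have -> : [set P : {set 'I_(size B) * 'I_(maxh B)} |
      m_level_placement m B P && (#|P| == k)] = [set x in map (dec m B) L].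
  apply/setP => P; rewrite !inE; apply/idP/idP.
    case/andP => HP /eqP Hk; have [Hv Hdec] := enc_valid HP.
    rewrite -Hdec; apply: map_f; rewrite mem_filter -(dec_card Hv) Hdec Hk eqxx /=.
    by apply/mem_plcr; rewrite revK.
  case/mapP => s Hs ->; have Hv := HL s Hs.
  rewrite dec_placement //= dec_card //.
  by move: Hs; rewrite mem_filter => /andP [].
rewrite cardsE (card_uniqP _) ?size_map ?size_filter //.
rewrite map_inj_in_uniq ?filter_uniq ?uniq_plcr //.
by move=> s1 s2 H1 H2; apply: dec_inj; apply: HL.
Qed.
Import GRing.Theory.
Local Open Scope ring_scope.

Definition ff (m : nat) (x : int) (j : nat) : int := \prod_(i < j) (x - (m * i)%N%:Z).
Definition FF (m : nat) (x : int) (B : seq nat) : int :=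
  \sum_(s <- plc m B) ff m x (size B - rooks s).

Lemma ffS m x j : ff m x j.+1 = ff m x j * (x - (m * j)%N%:Z).
Proof. by rewrite /ff big_ord_recr. Qed.

Lemma sum_const_seq (T : Type) (l : seq T) (c : int) : \sum_(i <- l) c = c *+ size l.
Proof. by elim: l => [|a l IH]; rewrite ?big_nil ?big_cons ?IH ?mulrS. Qed.

Lemma valid_plc m B s : s \in plc m B -> valid m B s.
Proof. by move/mem_plcr; rewrite revK. Qed.

Lemma lev_bound m B s b : valid m B s ->
  (forall i r, (i < size B)%N -> (r < nth 0%N B i)%N -> (r %/ m < b %/ m)%N) ->
  all (fun a => a < b %/ m)%N (lev m s).
Proof.
case=> Hsz Hfit _ Hd; apply/allP => a /mapP [r]; rewrite mem_pmap map_id => Hr ->.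
have Hi : (index (Some r) s < size s)%N by rewrite index_mem.
apply: (Hd (index (Some r) s)); first by rewrite -Hsz.
by apply: Hfit; rewrite nth_index.
Qed.

Lemma size_lev m s : size (lev m s) = rooks s.
Proof. by rewrite size_map size_pmap. Qed.

Lemma rooks_rcons s o : rooks (rcons s o) = (rooks s + (o : bool))%N.
Proof. by rewrite /rooks -cats1 count_cat /= addn0. Qed.

Lemma FF_rcons m x B b : (0 < m)%N ->
  (forall i r, (i < size B)%N -> (r < nth 0%N B i)%N -> (r %/ m < b %/ m)%N) ->
  FF m x (rcons B b) = FF m x B * (x + b%:Z - (m * size B)%N%:Z).
Proof.
move=> m0 Hd; rewrite /FF /plc rev_rcons.
change (plcr m (b :: rev B)) with [seq rcons s o | s <- plcr m (rev B), o <- choices m b s].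
rewrite big_allpairs_dep big_distrl /=; apply: eq_big_seq => s Hs.
have Hv := valid_plc Hs; have [Hsz _ Hu] := Hv.
have Hb := lev_bound Hv Hd.
have Hk : (rooks s <= size B)%N by rewrite -Hsz /rooks count_size.
have Hc := count_avail m0 Hu Hb; rewrite size_lev in Hc.
have Hmk : (m * rooks s <= b)%N.
  have : (size (lev m s) <= size (iota 0 (b %/ m)))%N.
    apply: uniq_leq_size => // a Ha; rewrite mem_iota /=; exact: (allP Hb).
  rewrite size_iota size_lev => H.
  by apply: (leq_trans (leq_mul (leqnn m) H)); rewrite mulnC leq_divM.
rewrite /choices big_cons big_map.
under eq_bigr do rewrite rooks_rcons size_rcons /=.
rewrite sum_const_seq size_filter Hc rooks_rcons size_rcons addn0 /=.
rewrite subSn // ffS addn1 subSS -mulr_natr -mulrDr; congr (_ * _).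
rewrite natz mulnBr -!subzn //; last by rewrite leq_mul2l Hk orbT.
lia.


Qed.

Lemma FF_nil m x : FF m x [::] = 1.
Proof. by rewrite /FF /plc /= big_seq1 /ff big_ord0. Qed.

Definition prefdom (m : nat) (B : seq nat) : Prop := forall i j r,
  (i < j < size B)%N -> (r < nth 0%N B i)%N -> (r %/ m < nth 0%N B j %/ m)%N.

Lemma FF_prod m x B : (0 < m)%N -> prefdom m B ->
  FF m x B = \prod_(l < size B) (x + (nth 0%N B l)%:Z - (m * l)%N%:Z).
Proof.
move=> m0; elim/last_ind: B => [|B b IH] HB; first by rewrite FF_nil big_ord0.
rewrite FF_rcons //; last first.
  move=> i r Hi Hr; have := HB i (size B) r; rewrite !nth_rcons Hi ltnn eqxx.
  by move=> H; apply: H Hr; rewrite size_rcons ltnSn.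



rewrite IH; last first.
  move=> i j r /andP [Hij Hj] Hr; have := HB i j r.
  rewrite !nth_rcons Hj (ltn_trans Hij Hj) size_rcons; apply => //.
  by rewrite Hij ltnS ltnW.
rewrite size_rcons big_ord_recr /= nth_rcons ltnn eqxx; congr (_ * _).
by apply: eq_bigr => i _; rewrite nth_rcons ltn_ord.
Qed.
Local Close Scope ring_scope.
Import GRing.Theory Num.Theory.

Lemma prefdom_of m B : 0 < m -> ferrers B -> singleton m B -> prefdom m B.
Proof.
move=> m0 HF HS i j r /andP [Hij Hj] Hr.
have Hi : i < size B by apply: ltn_trans Hij Hj.
have Hmono : forall a b, a <= b < size B -> nth 0%N B a <= nth 0%N B b.
  move=> a b /andP [Hab Hb]; apply: (sorted_leq_nth leq_trans leqnn) => //.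
  by rewrite inE (leq_ltn_trans Hab Hb).
have Hij' : nth 0%N B i <= nth 0%N B j by apply: Hmono; rewrite (ltnW Hij).
case: (eqVneq (nth 0%N B i %% m) 0) => Hmod.
  apply: leq_trans (leq_div2r m Hij').
  rewrite ltn_divLR //; move: (divn_eq (nth 0%N B i) m); rewrite Hmod addn0 => <-.
  exact: Hr.
have Hi1 : i.+1 < size B by apply: leq_ltn_trans Hij Hj.
move: HS => /forallP /(_ (Ordinal Hi)) /implyP /= H.
have : floorm m (nth 0%N B i) < floorm m (nth 0%N B i.+1).
  apply: H; rewrite Hi1 /= /floorm.
  move: (divn_eq (nth 0%N B i) m) Hmod => E; apply: contra => /eqP E2.
  apply/eqP; lia.
rewrite /floorm ltn_pmul2r // => H2.
apply: (leq_ltn_trans (leq_div2r m (ltnW Hr))).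
apply: (leq_trans H2); apply: leq_div2r; apply: Hmono; by rewrite Hij Hj.
Qed.

Local Open Scope ring_scope.

Lemma regroup (T : Type) (L : seq T) (h : T -> nat) (g : nat -> int) n :
  all (fun s => h s < n)%N L ->
  \sum_(s <- L) g (h s) = \sum_(k < n) (count (fun s => h s == k) L)%:R * g k.
Proof.
elim: L => [|a L IH] /=.
  by move=> _; rewrite big_nil big1 // => k _; rewrite mul0r.
case/andP => Ha HL; rewrite big_cons IH //.
under [RHS]eq_bigr do rewrite natrD mulrDl.
rewrite big_split /=; congr (_ + _).
rewrite (bigD1 (Ordinal Ha)) //= eqxx mul1r big1 ?addr0 // => k Hk.
suff -> : (h a == k) = false by rewrite mul0r.
apply: contraNF Hk => /eqP E; apply/eqP; apply: val_inj; by rewrite /= E.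
Qed.

Lemma FF_rook m x B : FF m x B =
  \sum_(k < (size B).+1) (rook_num m k B)%:R * ff m x (size B - k).
Proof.
rewrite /FF (@regroup _ _ rooks (fun k => ff m x (size B - k)) (size B).+1).

  by apply: eq_bigr => k _; rewrite rook_num_count.
apply/allP => s /valid_plc [Hsz _ _]; rewrite ltnS -Hsz; exact: count_size.
Qed.

Lemma prod_split2 n (F : nat -> int) i j : (i < n)%N -> (j < n)%N -> i != j ->
  \prod_(l < n) F l = F i * F j * \prod_(l < n | (val l != i) && (val l != j)) F l.
Proof.
move=> Hi Hj Hij.
rewrite (bigD1 (Ordinal Hi)) //= (bigD1 (Ordinal Hj)) /=; last by rewrite -val_eqE /= eq_sym.
by rewrite mulrA.

Qed.

Lemma nth_rv m B l : (l < size B)%N ->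
  nth 0 (root_vector m B) l = (m * l)%N%:Z - (nth 0%N B l)%:Z.
Proof. by move=> Hl; rewrite /root_vector (nth_map 0%N) ?size_iota // nth_iota. Qed.

Lemma key m B1 B2 i j k : (0 < m)%N -> prefdom m B1 -> prefdom m B2 ->
  rook_equiv m B1 B2 -> size B1 = size B2 ->
  (i < size B1)%N -> (j < size B1)%N -> i != j -> (0 < k)%N ->
  nth 0%N B1 i = (nth 0%N B2 i + k)%N -> (nth 0%N B1 j + k)%N = nth 0%N B2 j ->
  (forall l, l <> i -> l <> j -> nth 0%N B1 l = nth 0%N B2 l) ->
  [/\ nth 0 (root_vector m B2) i = nth 0 (root_vector m B1) j,
      nth 0 (root_vector m B2) j = nth 0 (root_vector m B1) i &
      nth 0 (root_vector m B1) i != nth 0 (root_vector m B1) j].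
Proof.
move=> m0 P1 P2 Req Hsz Hi Hj Hij k0 Ei Ej Eo.
set n := size B1.
set x : int := (m * n)%N%:Z + 1.
have Hf : FF m x B1 = FF m x B2.
  rewrite !FF_rook -Hsz; apply: eq_bigr => l _; by rewrite Req.
rewrite !FF_prod // -Hsz in Hf.
rewrite (prod_split2 (fun l : nat => x + (nth 0%N B1 l)%:Z - (m * l)%N%:Z) Hi Hj Hij) in Hf.
rewrite (prod_split2 (fun l : nat => x + (nth 0%N B2 l)%:Z - (m * l)%N%:Z) Hi Hj Hij) in Hf.

set R1 := \prod_(l < size B1 | _) _ in Hf.
set R2 := \prod_(l < size B1 | _) _ in Hf.
have ER : R1 = R2.
  apply: eq_bigr => l /andP [/eqP H1 /eqP H2]; by rewrite Eo.
have R0 : R1 != 0.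
  apply: lt0r_neq0; apply: prodr_gt0 => l _.
  have : (m * l <= m * n)%N by rewrite leq_mul2l ltnW ?orbT.
  rewrite /x; lia.

rewrite -ER in Hf; have {Hf}Hf := mulIf R0 Hf.
set A := x + (nth 0%N B1 i)%:Z - (m * i)%N%:Z in Hf.
set Bv := x + (nth 0%N B1 j)%:Z - (m * j)%N%:Z in Hf.
have E2i : x + (nth 0%N B2 i)%:Z - (m * i)%N%:Z = A - k%:Z.
  by rewrite /A Ei; lia.



have E2j : x + (nth 0%N B2 j)%:Z - (m * j)%N%:Z = Bv + k%:Z by rewrite /Bv -Ej; lia.
rewrite E2i E2j in Hf.
have Hk : k%:Z * (A - Bv - k%:Z) = 0.
  have -> : k%:Z * (A - Bv - k%:Z) = (A - k%:Z) * (Bv + k%:Z) - A * Bv by ring.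
  by rewrite -Hf subrr.
move: Hk => /eqP; rewrite mulf_eq0 => /orP [/eqP Hk0|/eqP HAB]; first by lia.
rewrite !nth_rv // -?Hsz //.
move: HAB; rewrite /A /Bv Ei -Ej; split; lia.
Qed.

Close Scope ring_scope.

Theorem theorem17 (m n : nat) (B1 B2 : seq nat) :
  (0 < m)%N -> size B1 = n -> size B2 = n ->
  rook_graph_edge m B1 B2 ->
  exists i1 i2 : nat,
    [/\ (i1 < i2 < n)%N,
        nth 0%R (root_vector m B1) i1 != nth 0%R (root_vector m B1) i2 &
        forall l, (l < n)%N ->
          nth 0%R (root_vector m B2) l =
          nth 0%R (root_vector m B1)
            (if l == i1 then i2 else if l == i2 then i1 else l)].
Proof.
move=> m0 H1 H2 [[F1 F2 S1 S2] [Req [Hsz [i [j [k [[Hi Hj Hij k0] [Ei Ej Eo]]]]]]]].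
have P1 := prefdom_of m0 F1 S1; have P2 := prefdom_of m0 F2 S2.
have Hij' : i != j by apply/eqP.
have [Z1 Z2 Zne] := key m0 P1 P2 Req Hsz Hi Hj Hij' k0 Ei Ej Eo.
have Oth : forall l, (l < n)%N -> l <> i -> l <> j ->
    nth 0%R (root_vector m B2) l = nth 0%R (root_vector m B1) l.
  move=> l Hl Hli Hlj; rewrite !nth_rv ?H1 ?H2 //; by rewrite Eo.
case: (ltngtP i j) => Hc; last by move/eqP: Hij'; rewrite Hc.
- exists i, j; split; first by rewrite Hc -H1 Hj.
  + exact: Zne.
  move=> l Hl; case: (eqVneq l i) => [->|Hli] //.
  case: (eqVneq l j) => [->|Hlj] //.
  by apply: Oth => //; apply/eqP.
- exists j, i; split; first by rewrite Hc -H1 Hi.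
  + by rewrite eq_sym.
  move=> l Hl; case: (eqVneq l j) => [->|Hlj] //.
  case: (eqVneq l i) => [->|Hli] //.
  by apply: Oth => //; apply/eqP.
Qed.
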